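(* Let $q\ge 2$ be a prime power and let $\alpha,\beta$ be vertices of $\Gamma_q$ with $d_{\Gamma_q}(\alpha,\beta)=3$. Then $A=N^2_{\Gamma_q}[\alpha]\cup N^2_{\Gamma_q}[\beta]$ is a perfect dominating set of $\Gamma_q$ and $|A|=2(q+1)^2$.
   Context: Let $q\ge 2$ be a prime power and $\mathbb{F}_q$ the field with $q$ elements; in the vertex labels below the symbol $q$ is also used as an extra formal symbol not belonging to $\mathbb{F}_q$, and all arithmetic is in $\mathbb{F}_q$. $\Gamma_q$ is the bipartite graph with parts $V_0,V_1$, where for $r\in\{0,1\}$ the set $V_r$ consists of the vertices $(a,b,c)_r$ with $a\in\mathbb{F}_q\cup\{q\}$, $b,c\in\mathbb{F}_q$, together with the vertices $(q,q,a)_r$ with $a\in\mathbb{F}_q\cup\{q\}$. The edges are given by: for $a,b,c\in\mathbb{F}_q$, $N((a,b,c)_1)=\{(x,\,ax+b,\,a^2x+2ab+c)_0: x\in\mathbb{F}_q\}\cup\{(q,a,c)_0\}$; for $b,c\in\mathbb{F}_q$, $N((q,b,c)_1)=\{(c,b,x)_0: x\in\mathbb{F}_q\}\cup\{(q,q,c)_0\}$; for $a\in\mathbb{F}_q\cup\{q\}$, $N((q,q,a)_1)=\{(q,a,x)_0: x\in\mathbb{F}_q\}\cup\{(q,q,q)_0\}$. There are no other edges. For a graph $G$, $d_G$ is the distance, $N^t_G(u)=\{x: d_G(u,x)=t\}$, $N^t_G[u]=\{x: d_G(u,x)\le t\}$, $N_G[u]=N^1_G[u]$. A set $U\subseteq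 V(G)$ is a perfect dominating set of $G$ if every vertex $x\in V(G)\setminus U$ has exactly one neighbour in $U$. *)

(* Defs.v *)
From HB Require Import structures.
From mathcomp Require Import all_boot all_order all_algebra all_field.
Set Implicit Arguments. Unset Strict Implicit. Unset Printing Implicit Defensive.
Import GRing.Theory.
Local Open Scope ring_scope.

(* Labels of a vertex in one part of Gamma_q:
   inl (inl (a,b,c))  ~ (a,b,c)   with a,b,c in F
   inl (inr (b,c))    ~ (q,b,c)   with b,c in F
   inr (Some a)       ~ (q,q,a)   with a in F
   inr None           ~ (q,q,q)                                       *)
Definition point (F : finFieldType) : finType :=
  ((F * F * F) + (F * F) + option F)%type.

(* adj1 u v : the part-1 vertex u_1 is adjacent to the part-0 vertex v_0 *)
Definition adj1 (F : finFieldType) (u v : point F) : bool :=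
  match u with
  | inl (inl (a, b, c)) =>
      match v with
      | inl (inl (x, y, z)) => (y == a * x + b) && (z == a ^+ 2 * x + 2%:R * a * b + c)
      | inl (inr (y, z)) => (y == a) && (z == c)
      | _ => false
      end
  | inl (inr (b, c)) =>
      match v with
      | inl (inl (x, y, _)) => (x == c) && (y == b)
      | inr (Some y) => y == c
      | _ => false
      end
  | inr (Some a) =>
      match v with
      | inl (inr (y, _)) => y == a
      | inr None => true
      | _ => false
      end
  | inr None =>
      match v with
      | inr _ => true
      | _ => false
      end
  end.

(* vertices of Gamma_q: (r, p) with r = true for V_1, r = false for V_0 *)
Definition vertex (F : finFieldType) : finType := (bool * point F)%type.

Definition gamma_adj (F : finFieldType) : rel (vertex F) :=
  fun u v =>
    match u, v with
    | (true, x), (false, y) => adj1 x y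
    | (false, x), (true, y) => adj1 y x
    | _, _ => false
    end.

Fixpoint ball (T : finType) (e : rel T) (t : nat) (u : T) : {set T} :=
  match t with
  | 0%N => [set u]
  | t'.+1 => ball e t' u :|: [set y | [exists x in ball e t' u, e x y]]
  end.

Definition dist_eq (T : finType) (e : rel T) (u v : T) (t : nat) : Prop :=
  v \in ball e t u /\ (forall s, (s < t)%N -> v \notin ball e s u).

Definition perfect_dominating (T : finType) (e : rel T) (U : {set T}) : Prop :=
  forall x, x \notin U -> #|[set y in U | e x y]| = 1%N.

(* Main.v *)
Require Import Defs.
From HB Require Import structures.
From mathcomp Require Import all_boot all_order all_algebra all_field.
From mathcomp Require Import ring zify.
Set Implicit Arguments. Unset Strict Implicit. Unset Printing Implicit Defensive.
Import GRing.Theory.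
Local Open Scope ring_scope.

Notation inc := Defs.adj1.

Ltac crush := repeat match goal with
  | H : is_true (_ && _) |- _ => case/andP: H
  | H : is_true (_ == _) |- _ => move/eqP: H
  | |- is_true (_ && _) -> _ => case/andP
  | |- is_true (_ == _) -> _ => move/eqP
  | |- ?x = _ -> _ => (is_var x; let e := fresh in move=> e; subst x) || intro
  | |- _ = ?x -> _ => (is_var x; let e := fresh in move=> e; subst x) || intro
  | |- is_true false -> _ => done
  | |- is_true true -> _ => move=> _
  end.

Lemma no_quad (F : finFieldType) (l l' p p' : point F) :
  inc l p -> inc l p' -> inc l' p -> inc l' p' -> l = l' \/ p = p'.
Proof.
case: l => [[[[a b] c]|[b c]]|[a|]]; case: l' => [[[[a' b'] c']|[b' c']]|[a'|]];
case: p => [[[[x y] z]|[y z]]|[x|]]; case: p' => [[[[x' y'] z']|[y' z']]|[x'|]] //=;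
crush; try by [left|right].
all: try (match goal with H : ?u + ?b = ?u + ?b' |- _ => move/addrI: H => H; subst; by left end).
match goal with H0 : ?a * ?x + ?b = ?a' * ?x + ?b', H2 : ?a * ?x' + ?b = ?a' * ?x' + ?b' |- _ =>
  rename H0 into E0; rename H2 into E2 end.
case: (eqVneq a a') => [e|ne].
  subst a'; move/addrI: E0 => E0; subst b'; left.
  match goal with H1 : _ + ?c = _ + ?c' |- _ => move/addrI: H1 => -> end; by [].
right.
have e : (a - a') * (x - x') = 0.
  transitivity ((a*x+b) - (a'*x+b') - ((a*x'+b) - (a'*x'+b'))); first by ring.
  by rewrite E0 E2; ring.
by move/eqP: e; rewrite mulf_eq0 !subr_eq0 (negbTE ne) /= => /eqP ->.
Qed.

Lemma lin2 (F : fieldType) (u v k1 k2 e1 e2 : F) :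
  e1 = 0 -> e2 = 0 -> u - v = k1 * e1 + k2 * e2 -> u = v.
Proof. by move=> -> -> /eqP; rewrite !mulr0 addr0 subr_eq0 => /eqP. Qed.

Ltac splitq := rewrite /Defs.adj1 /= ?eqxx /=; repeat (apply/andP; split); rewrite ?eqxx //; apply/eqP.

Lemma gq_exists (F : finFieldType) (l p : point F) :
  ~~ inc l p -> exists p' l', [&& inc l p', inc l' p' & inc l' p].
Proof.
case: l => [[[[a b] c]|[b c]]|[a|]]; case: p => [[[[x y] z]|[y z]]|[x|]] //= Hn.
-
  case: (eqVneq y (a*x+b)) => Hy.
    exists (inl (inl (x, y, a^+2*x + 2%:R*a*b + c))), (inl (inr (y, x))).
    by rewrite /Defs.adj1 /= Hy !eqxx.
  have Hd : y - a*x - b != 0 by rewrite -addrA -opprD subr_eq0.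
  set a' := (z - a*y - a*b - c) / (y - a*x - b).
  have Ha' : a' * (y - a*x - b) - (z - a*y - a*b - c) = 0 by rewrite /a' divfK // subrr.
  clearbody a'.
  case: (eqVneq a' a) => Haa.
    subst a'.
    exists (inl (inr (a, c))), (inl (inl (a, y - a*x, c))).
    splitq.
      by ring.
    by apply: (lin2 (k1 := 0) (k2 := -1) (e1 := 0) erefl Ha'); ring.
  have Hd2 : a - a' != 0 by rewrite subr_eq0 eq_sym.
  set t := (y - a'*x - b) / (a - a').
  have Ht : (a - a') * t - (y - a'*x - b) = 0 by rewrite /t mulrC divfK // subrr.
  clearbody t.
  exists (inl (inl (t, a*t+b, a^+2*t + 2%:R*a*b + c))),
         (inl (inl (a', y - a'*x, z - a'^+2*x - 2%:R*a'*(y - a'*x)))).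
  splitq.
  + by apply: (lin2 (k1 := 1) (k2 := 0) Ht Ha'); ring.
  + by apply: (lin2 (k1 := a + a') (k2 := 1) Ht Ha'); ring.
  + by ring.
  + by ring.
-
  case: (eqVneq y a) => Hy.
    subst y; exists (inl (inr (a, c))), (inr (Some a)); by rewrite /Defs.adj1 /= !eqxx.
  have Hd : (a - y)^+2 != 0 by rewrite expf_eq0 /= subr_eq0 eq_sym.
  set t := (2%:R*b*(y - a) + z - c) / (a - y)^+2.
  have Ht : (a - y)^+2 * t - (2%:R*b*(y - a) + z - c) = 0 by rewrite /t mulrC divfK // subrr.
  clearbody t.
  exists (inl (inl (t, a*t+b, a^+2*t + 2%:R*a*b + c))), (inl (inl (y, (a-y)*t + b, z))).
  splitq.
    by ring.
  by apply: (lin2 (k1 := 1) (k2 := 0) Ht (erefl (0:F))); ring.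
- exists (inl (inl (x, a*x+b, a^+2*x + 2%:R*a*b + c))), (inl (inr (a*x+b, x))); by rewrite /Defs.adj1 /= !eqxx.
- exists (inl (inr (a, c))), (inr (Some a)); by rewrite /Defs.adj1 /= !eqxx.
-
  case: (eqVneq x c) => Hx.
    subst x; exists (inr (Some c)), (inl (inr (y, c))); by rewrite /Defs.adj1 /= !eqxx.
  have Hd : c - x != 0 by rewrite subr_eq0 eq_sym.
  set a' := (b - y) / (c - x).
  have Ha' : a' * (c - x) - (b - y) = 0 by rewrite /a' divfK // subrr.
  clearbody a'.
  exists (inl (inl (c, b, a'^+2 * (c - x) + z))),
         (inl (inl (a', y - a'*x, z - a'^+2*x - 2%:R*a'*(y - a'*x)))).
  splitq.
  + by apply: (lin2 (k1 := -1) (k2 := 0) Ha' (erefl (0:F))); ring.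
  + by ring.
  + by ring.
  + by ring.
- exists (inl (inl (c, b, y^+2*c + 2%:R*y*(b - y*c) + z))), (inl (inl (y, b - y*c, z))).
  splitq; ring.
- exists (inr (Some c)), (inr None); by rewrite /Defs.adj1 /= !eqxx.
- exists (inr (Some c)), (inr None); by rewrite /Defs.adj1 /= !eqxx.
- exists (inl (inr (a, z - a^+2*x - 2%:R*a*(y - a*x)))),
         (inl (inl (a, y - a*x, z - a^+2*x - 2%:R*a*(y - a*x)))).
  splitq; ring.
- exists (inr None), (inr (Some y)); by rewrite /Defs.adj1 /= !eqxx.
- exists (inr None), (inr None); by [].
- exists (inr (Some x)), (inl (inr (y, x))); by rewrite /Defs.adj1 /= !eqxx.
- exists (inr None), (inr (Some y)); by rewrite /Defs.adj1 /= !eqxx.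
Qed.

Lemma card_optS (T A : finType) (S : {set T}) (f : option A -> T) :
  injective f -> (forall v, v \in S -> exists o, v = f o) -> (forall o, f o \in S) ->
  #|S| = #|A|.+1.
Proof.
move=> fi cov fin.
have -> : S = f @: setT.
  apply/setP=> v; apply/idP/imsetP.
    by case/cov=> o ->; exists o.
  by case=> o _ ->.
by rewrite card_imset // cardsT card_option.
Qed.

Ltac injt := let o := fresh in let o' := fresh in
  move=> [o|] [o'|] //=; case; intros; subst; done.
Ltac covt := let v := fresh in let H := fresh in
  move=> v; rewrite inE; case: v => [[[[? ?] ?]|[? ?]]|[?|]] H //=; move: H; rewrite /Defs.adj1 /=; crush;
  solve [ exists None; reflexivity | eexists (Some _); reflexivity
        | match goal with |- exists _, inl (inl (?a,_,_)) = _ => exists (Some a); simpl; congr (inl (inl (_,_,_))); ring end ].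
Ltac int := let o := fresh in move=> [o|]; rewrite inE; splitq; ring.
Ltac degt f := apply: (card_optS (f := f)); [injt|covt|int].

Lemma deg_line (F : finFieldType) (l : point F) : #|[set p | inc l p]| = #|F|.+1.
Proof.
case: l => [[[[a b] c]|[b c]]|[a|]].
- degt (fun o : option F => match o return point F with Some x => inl (inl (x, a*x+b, a^+2*x+2%:R*a*b+c)) | None => inl (inr (a,c)) end).
- degt (fun o : option F => match o return point F with Some x => inl (inl (c, b, x)) | None => inr (Some c) end).
- degt (fun o : option F => match o return point F with Some x => inl (inr (a, x)) | None => inr None end).
- degt (fun o : option F => (inr o : point F)).
Qed.

Lemma deg_point (F : finFieldType) (p : point F) : #|[set l | inc l p]| = #|F|.+1.
Proof.
case: p => [[[[x y] z]|[y z]]|[a|]].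
- degt (fun o : option F => match o return point F with Some a => inl (inl (a, y - a*x, z - a^+2*x - 2%:R*a*(y - a*x))) | None => inl (inr (y,x)) end).
- degt (fun o : option F => match o return point F with Some b => inl (inl (y, b, z)) | None => inr (Some y) end).
- degt (fun o : option F => match o return point F with Some b => inl (inr (b, a)) | None => inr None end).
- degt (fun o : option F => (inr o : point F)).
Qed.

Lemma sum_bool_card (T : finType) (P : pred T) : \sum_x (P x : nat) = #|[set x | P x]|.
Proof. by rewrite -sum1dep_card [RHS]big_mkcond /=; apply: eq_bigr => x _; case: (P x). Qed.

Lemma sum_andl (T : finType) (b : bool) (R : pred T) :
  \sum_x ((b && R x) : nat) = (b * \sum_x (R x : nat))%N.
Proof. by case: b => /=; rewrite ?mul1n ?mul0n // big1. Qed.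

Lemma card_minus1 (T : finType) (P : pred T) (a : T) :
  P a -> #|[set x | P x & x != a]| = #|[set x | P x]|.-1.
Proof.
move=> Pa; rewrite (cardsD1 a [set x | P x]) inE Pa add1n /=.
by apply: eq_card => x; rewrite !inE andbC.
Qed.

Lemma sum_ge1_eq (T : finType) (P : pred T) (c : T -> nat) :
  (forall i, P i -> 0 < c i)%N -> \sum_(i | P i) c i = #|[set i | P i]| ->
  forall i, P i -> c i = 1%N.
Proof.
move=> pos Hs i Pi.
have H1 : (#|[set j | P j && (j != i)]| <= \sum_(j | P j && (j != i)) c j)%N.
  rewrite -sum1dep_card; apply: leq_sum => j /andP[Pj _]; exact: pos.
move: Hs H1; rewrite (bigD1 i) //= (card_minus1 Pi) => Hs H1.
have := pos i Pi; have : (0 < #|[set j | P j]|)%N by apply/card_gt0P; exists i; rewrite inE.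
move: (\sum_(j | P j && (j != i)) c j) (#|[set j | P j]|) Hs H1 => s N.
lia.
Qed.

Lemma card_point (F : finFieldType) :
  #|point F| = (#|F| * #|F| * #|F| + #|F| * #|F| + #|F|.+1)%N.
Proof. by rewrite /point !card_sum !card_prod card_option. Qed.

Lemma gq_unique (F : finFieldType) (l p p1 m1 p2 m2 : point F) :
  ~~ inc l p -> inc l p1 -> inc m1 p1 -> inc m1 p ->
  inc l p2 -> inc m2 p2 -> inc m2 p -> p1 = p2 /\ m1 = m2.
Proof.
pose q := #|F|.
pose Q (x : point F * point F) := [&& inc x.2 p, inc x.2 x.1 & x.1 != p].
pose R (l : point F) (x : point F * point F) := inc l x.1 && (l != x.2).
pose S l := [set x | Q x && R l x].
have Sinc : forall l, inc l p -> #|S l| = 0%N.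
  move=> l0 Hl0; apply/eqP; rewrite cards_eq0; apply/eqP/setP=> [[p' m]].
  rewrite !inE /Q /R /=; apply/negP=> /andP[/and3P[Hm Hm' Hp'] /andP[Hl' Hlm]].
  case: (no_quad Hl0 Hl' Hm Hm') => E; [by rewrite E eqxx in Hlm | by rewrite E eqxx in Hp'].
have Snot : forall l, ~~ inc l p -> (0 < #|S l|)%N.
  move=> l0 Hl0; apply/card_gt0P; case: (gq_exists Hl0) => p' [m /and3P[H1 H2 H3]].
  exists (p', m); rewrite inE /Q /R /= H3 H2 H1 /=; apply/andP; split.
    by apply: contraNneq Hl0 => <-.
  by apply: contraNneq Hl0 => ->.
have Qsum : \sum_x (Q x : nat) = (#|F|.+1 * #|F|)%N.
  rewrite -(pair_bigA _ (fun a b => (Q (a, b) : nat))) /Q /=.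
  rewrite exchange_big /=.
  under eq_bigr => m _ do rewrite sum_andl sum_bool_card.
  transitivity (\sum_m ((inc m p) * #|F|)%N).
    apply: eq_bigr => m _; case Hm: (inc m p) => //=.
    by rewrite (card_minus1 (P := fun x => inc m x) Hm) deg_line.
  rewrite -big_distrl /= sum_bool_card deg_point //.
have Ssum : \sum_l #|S l| = (#|F|.+1 * #|F| * #|F|)%N.
  under eq_bigr => l0 _ do rewrite -sum_bool_card.
  rewrite exchange_big /=.
  transitivity (\sum_x ((Q x) * #|F|)%N).
    apply: eq_bigr => x _; rewrite sum_andl sum_bool_card; case Hx: (Q x) => //=.
    case/and3P: Hx => _ Hx _.
    by rewrite /R (card_minus1 (P := fun l => inc l x.1) Hx) deg_point.
  by rewrite -big_distrl /= Qsum.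
have Ssum2 : \sum_(l | ~~ inc l p) #|S l| = #|[set l | ~~ inc l p]|.
  have Hc : #|[set l | ~~ inc l p]| = (#|point F| - #|F|.+1)%N.
    rewrite -(deg_point p) -(cardsC [set l | inc l p]); apply/eqP.
    rewrite addKn; apply/eqP; apply: eq_card => l0; rewrite !inE.
    by [].
  rewrite Hc card_point.
  move: Ssum; rewrite (bigID (fun l => inc l p)) /= big1; last by move=> l0; exact: Sinc.
  rewrite add0r => ->; rewrite addnK; ring.
have S1 : forall l0, ~~ inc l0 p -> #|S l0| = 1%N :=
  sum_ge1_eq (P := fun l0 => ~~ inc l0 p) (c := fun l0 => #|S l0|) Snot Ssum2.
move=> Hl Hp1 Hm1 Hm1p Hp2 Hm2 Hm2p.
have inS : forall p' m, inc l p' -> inc m p' -> inc m p -> (p', m) \in S l.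
  move=> p' m H1 H2 H3; rewrite inE /Q /R /= H1 H2 H3 /=; apply/andP; split.
    by apply: contraNneq Hl => <-.
  by apply: contraNneq Hl => ->.
have in1 := inS _ _ Hp1 Hm1 Hm1p; have in2 := inS _ _ Hp2 Hm2 Hm2p.
move/eqP: (S1 l Hl) => /cards1P [x Ex].
by move: in1 in2; rewrite Ex !inE => /eqP <- /eqP [-> ->].
Qed.

Notation G := (@gamma_adj _).

Lemma e_sym (F : finFieldType) (u v : vertex F) : G u v = G v u.
Proof. by case: u => [[] x]; case: v => [[] y]. Qed.

Lemma e_side (F : finFieldType) (u v : vertex F) : G u v -> u.1 != v.1.
Proof. by case: u => [[] x]; case: v => [[] y]. Qed.

Lemma e_deg (F : finFieldType) (u : vertex F) : #|[set v | G u v]| = #|F|.+1.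
Proof.
have injb : forall b : bool, injective (pair b : point F -> vertex F) by move=> b a c [].
case: u => [[] x].
- rewrite -(deg_line x) -(card_imset _ (injb false)); apply: eq_card => [[[] y]].
    by rewrite !inE; apply/esym/imsetP => [[z _ []]].
  by rewrite inE mem_imset // inE.
- rewrite -(deg_point x) -(card_imset _ (injb true)); apply: eq_card => [[[] y]].
    by rewrite inE mem_imset // inE.
  by rewrite !inE; apply/esym/imsetP => [[z _ []]].
Qed.

Lemma g_quad (F : finFieldType) (u v u' v' : vertex F) :
  G u v -> G u v' -> G u' v -> G u' v' -> u = u' \/ v = v'.
Proof.
case: u => [[] l]; case: v => [[] p]; case: u' => [[] l']; case: v' => [[] p'] //=.
  by move=> H1 H2 H3 H4; case: (no_quad H1 H2 H3 H4) => ->; [left|right].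
by move=> H1 H2 H3 H4; case: (no_quad H1 H3 H2 H4) => ->; [right|left].
Qed.

Lemma g_exists (F : finFieldType) (u v : vertex F) :
  u.1 != v.1 -> ~~ G u v -> exists x y, [/\ G u x, G x y & G y v].
Proof.
case: u => [[] l]; case: v => [[] p] //= _ H.
  case: (gq_exists H) => p' [m /and3P[H1 H2 H3]].
  by exists (false, p'), (true, m).
case: (gq_exists H) => p' [m /and3P[H1 H2 H3]].
by exists (true, m), (false, p').
Qed.

Lemma g_unique (F : finFieldType) (u v x1 y1 x2 y2 : vertex F) :
  u.1 != v.1 -> ~~ G u v -> G u x1 -> G x1 y1 -> G y1 v ->
  G u x2 -> G x2 y2 -> G y2 v -> x1 = x2 /\ y1 = y2.
Proof.
case: u => [[] l]; case: v => [[] p] //= _ H;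
case: x1 => [[] a1]; case: y1 => [[] b1]; case: x2 => [[] a2]; case: y2 => [[] b2] //=.
  by move=> H1 H2 H3 H4 H5 H6; case: (gq_unique H H1 H2 H3 H4 H5 H6) => -> ->.
by move=> H1 H2 H3 H4 H5 H6; case: (gq_unique H H3 H2 H1 H6 H5 H4) => -> ->.
Qed.

Lemma ballS (F : finFieldType) t (u v : vertex F) :
  (v \in ball G t.+1 u) = (v \in ball G t u) || [exists x, (x \in ball G t u) && G x v].
Proof. by rewrite /= !inE. Qed.

Lemma ball1 (F : finFieldType) (u v : vertex F) : (v \in ball G 1 u) = (v == u) || G u v.
Proof.
rewrite ballS /= inE; congr (_ || _); apply/existsP/idP.
  by case=> x /andP[/set1P -> H].
by move=> H; exists u; rewrite inE eqxx.
Qed.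

Lemma in_ball2 (F : finFieldType) (u v : vertex F) :
  v \in ball G 2 u <-> v = u \/ G u v \/ exists x, G u x /\ G x v.
Proof.
rewrite ballS ball1; split.
  case/orP => [/orP[/eqP->|H]|/existsP[x /andP[Hx H]]]; [by left|by right;left|].
  rewrite ball1 in Hx; case/orP: Hx => [/eqP Hx|Hx]; first by subst x; right; left.
  by right; right; exists x.
case => [->|[H|[x [H1 H2]]]]; first by rewrite eqxx.
  by rewrite H orbT.
by apply/orP; right; apply/existsP; exists x; rewrite ball1 H1 orbT.
Qed.

Lemma bneq2 (a b c : bool) : a != b -> b != c -> a = c.
Proof. by case: a; case: b; case: c. Qed.
Lemma bneq3 (a b c d : bool) : a != b -> b != c -> c != d -> a != d.
Proof. by case: a; case: b; case: c; case: d. Qed.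

Lemma dom_one (F : finFieldType) (a b z : vertex F) :
  a.1 != b.1 -> z \notin ball G 2 a -> z \notin ball G 2 b -> z.1 != a.1 ->
  #|[set y in ball G 2 a :|: ball G 2 b | G z y]| = 1%N.
Proof.
move=> Hab Hza Hzb Hz.
have nGaz : ~~ G a z.
  by apply: contra Hza => H; apply/in_ball2; right; left.
have Hzb' : z.1 = b.1 by rewrite (bneq2 Hz Hab).
case: (g_exists (u := a) (v := z) _ nGaz) => [|x [y [G1 G2 G3]]]; first by rewrite eq_sym.
apply/eqP/cards1P; exists y; apply/setP => w; rewrite inE in_setU in_set1; apply/andP/eqP.
  case=> /orP[] Hw Gzw.
  - case: ((in_ball2 _ _).1 Hw) => [Ew|[Gaw|[x' [G1' G2']]]].
    + by subst w; rewrite e_sym Gzw in nGaz.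
    + by case/negP: Hza; apply/in_ball2; right; right; exists w; split; last rewrite e_sym.
    + rewrite e_sym in Gzw.
      by case: (g_unique (u := a) (v := z) _ nGaz G1 G2 G3 G1' G2' Gzw) => [|_ ->] //; rewrite eq_sym.
  - case: ((in_ball2 _ _).1 Hw) => [Ew|[Gbw|[x' [G1' G2']]]].
    + by subst w; move: (e_side Gzw); rewrite Hzb' eqxx.
    + by case/negP: Hzb; apply/in_ball2; right; right; exists w; split; last rewrite e_sym.
    + have Gwz : G w z by rewrite e_sym.
      by move: (bneq3 (e_side G1') (e_side G2') (e_side Gwz)); rewrite Hzb' eqxx.
move=> ->; split; last by rewrite e_sym.
by apply/orP; left; apply/in_ball2; right; right; exists x.
Qed.

Lemma card_ball2 (F : finFieldType) (u : vertex F) :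
  #|ball G 2 u| = (#|F|.+1 * #|F|.+1 + 1)%N.
Proof.
pose N := [set v | G u v].
pose P2 (v : vertex F) := (v != u) && [exists x, G u x && G x v].
pose N2 := [set v | P2 v].
have Eb : ball G 2 u = u |: (N :|: N2).
  apply/setP => w; apply/idP/idP.
    case/in_ball2 => [->|[H|[x [H1 H2]]]]; rewrite !inE ?eqxx //.
      by rewrite H orbT.
    case: (eqVneq w u) => //= Hw; rewrite orbC /P2 Hw /=; apply/orP; left.
    by apply/existsP; exists x; rewrite H1.
  move=> Hw; apply/in_ball2; move: Hw.
  rewrite !inE => /orP[/eqP->|/orP[H|/andP[_ /existsP[x /andP[H1 H2]]]]].
  - by left.
  - by right; left.
  - by right; right; exists x.
have sideN : forall v, v \in N -> v.1 != u.1.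
  by move=> v; rewrite inE => /e_side; rewrite eq_sym.
have sideN2 : forall v, v \in N2 -> v.1 = u.1.
  move=> v; rewrite inE => /andP[_ /existsP[x /andP[H1 H2]]].
  by apply/esym/(bneq2 (e_side H1) (e_side H2)).
have cN2 : #|N2| = (#|F|.+1 * #|F|)%N.
  rewrite -sum_bool_card.
  transitivity (\sum_v \sum_x ((G u x && (G x v && (v != u))) : nat)).
    apply: eq_bigr => v _.
    rewrite sum_bool_card; case Hv: (P2 v) => /=.
      case/andP: Hv => Hvu /existsP[x0 /andP[H1 H2]].
      apply/esym/eqP/cards1P; exists x0; apply/setP => x; rewrite !inE.
      apply/idP/eqP; last by move=> ->; rewrite H1 H2 Hvu.
      case/and3P => H1' H2' _.
      have H2s : G v x0 by rewrite e_sym.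
      have H2s' : G v x by rewrite e_sym.
      case: (g_quad H1 H1' H2s H2s') => // E; by rewrite E eqxx in Hvu.
    apply/esym/eqP; rewrite cards_eq0; apply/eqP/setP => x; rewrite !inE.
    apply/negP => /and3P[H1 H2 H3]; move: Hv; rewrite /P2 H3 /=.
    by move/negbT/negP; apply; apply/existsP; exists x; rewrite H1.
  etransitivity; first exact: exchange_big.
  transitivity (\sum_x ((G u x) * #|F|)%N).
    apply: eq_bigr => x _; rewrite sum_andl sum_bool_card; case Hx: (G u x) => //=.
    have Hxu : G x u by rewrite e_sym.
    by rewrite (card_minus1 (P := fun v => G x v) Hxu) e_deg.
  by rewrite -big_distrl /= sum_bool_card e_deg.
have dis : N :&: N2 = set0.
  apply/setP => v; rewrite !inE; apply/negP => /andP[H1 H2].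
  have := sideN v; rewrite inE H1 => /(_ isT).
  by have := sideN2 v; rewrite inE H2 => /(_ isT) ->; rewrite eqxx.
rewrite Eb cardsU1 cardsU dis cards0 subn0 e_deg cN2.
have -> : u \notin N :|: N2.
  rewrite !inE negb_or; apply/andP; split.
    by apply/negP => /e_side; rewrite eqxx.
  by rewrite /P2 eqxx.
rewrite /= add1n; ring.
Qed.

Local Close Scope ring_scope.

Theorem theorem2 (F : finFieldType) (alpha beta : vertex F) :
  dist_eq (@gamma_adj F) alpha beta 3 ->
  perfect_dominating (@gamma_adj F)
    (ball (@gamma_adj F) 2 alpha :|: ball (@gamma_adj F) 2 beta) /\
  #|ball (@gamma_adj F) 2 alpha :|: ball (@gamma_adj F) 2 beta| = (2 * (#|F| + 1) ^ 2)%N.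
Proof.
move=> [H3 Hn].
have H2 : beta \notin ball G 2 alpha := Hn 2 isT.
have nb1 : ~~ G alpha beta.
  by apply: contra H2 => H; apply/in_ball2; right; left.
have nb2 : forall x, G alpha x -> G x beta -> False.
  by move=> x H1 H1'; case/negP: H2; apply/in_ball2; right; right; exists x.
have nb0 : beta != alpha.
  by apply: contra H2 => /eqP ->; apply/in_ball2; left.
rewrite ballS in H3.
case/orP: H3 => [H|/existsP[y /andP[Hy Gy]]]; first by rewrite H in H2.
case: ((in_ball2 _ _).1 Hy) => [Ey|[Gay|[x [Gax Gxy]]]].
- by subst y; rewrite Gy in nb1.
- by case: (nb2 _ Gay Gy).
have Hab : alpha.1 != beta.1 := bneq3 (e_side Gax) (e_side Gxy) (e_side Gy).
split.
  move=> z; rewrite in_setU negb_or => /andP[Hza Hzb].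
  case: (eqVneq z.1 alpha.1) => Hz.
    have Hzb1 : z.1 != beta.1 by rewrite Hz.
    rewrite setUC; apply: dom_one => //; by rewrite eq_sym.
  exact: dom_one.
have Inter : ball G 2 alpha :&: ball G 2 beta = [set x; y].
  apply/setP => w; rewrite in_setI in_set2; apply/andP/orP.
    case=> Hwa Hwb.
    case: ((in_ball2 _ _).1 Hwa) => [Ew|[Gaw|[x' [G1 G2]]]].
    - subst w; case: ((in_ball2 _ _).1 Hwb) => [E|[Gba|[x'' [G1 G2]]]].
      + by rewrite E eqxx in nb0.
      + by rewrite e_sym Gba in nb1.
      + have G1' : G alpha x'' by rewrite e_sym.
        have G2' : G x'' beta by rewrite e_sym.
        by case: (nb2 _ G1' G2').
    - case: ((in_ball2 _ _).1 Hwb) => [E|[Gbw|[x'' [G1 G2]]]].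
      + by subst w; rewrite Gaw in nb1.
      + by case: (nb2 w Gaw); rewrite e_sym.
      + have G1' : G w x'' by rewrite e_sym.
        have G2' : G x'' beta by rewrite e_sym.
        case: (g_unique Hab nb1 Gax Gxy Gy Gaw G1' G2') => -> _.
        by left.
    - case: ((in_ball2 _ _).1 Hwb) => [E|[Gbw|[x'' [G1' G2']]]].
      + by subst w; case: (nb2 _ G1 G2).
      + have Gwb : G w beta by rewrite e_sym.
        case: (g_unique Hab nb1 Gax Gxy Gy G1 G2 Gwb) => _ ->.
        by right.
      + have := bneq2 (e_side G1) (e_side G2).
        have := bneq2 (e_side G1') (e_side G2').
        by move=> <- E; rewrite E eqxx in Hab.
  case=> /eqP ->; split; apply/in_ball2.
  - by right; left.
  - by right; right; exists y; split; rewrite e_sym.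
  - by right; right; exists x.
  - by right; left; rewrite e_sym.
have Hxy : x != y by apply: contraTneq (e_side Gxy) => ->; rewrite eqxx.
rewrite cardsU Inter cards2 Hxy !card_ball2 addn1 expnS expn1.
lia.
Qed.
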